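(* Let $k>m$ and $2\le r\le \delta_k+1$. (1) If $\delta_k\le m-2$, then for $i=1,2,3$ (with $k$ odd for $i=2,3$), every graph $G_i(n,k)$ satisfies $N_r(G_i(n,k)) \leq N_r(H_n(m,k))$; equality holds if and only if $r=2$ and $G_i(n,k)\cong H_n(m,k)$ (for $i=1,3$), or $k=5$, $m=3$ and $G_2(n,k)\cong S_{a,n-a}$ for some $a$ (for $i=2$). (2) For $k=7$ and $i=4,5$: $N_r( G_i(n) ) < N_r(K_2\vee I_{n-2})$. (3) For $k=9$ and $n>4$: $N_r(I_2 \vee \frac{n-2}{2} K_2 ) < N_r(K_3 \vee I_{n-3})$ and $N_r(K_2 \vee \frac{n-2}{2} K_2 ) < N_r(K_3 \vee I_{n-3})$.
   Context: All graphs are finite and simple. $K_n$, $I_n$ denote the complete and the edgeless graph on $n$ vertices; $K_{1,s}$ is the star with $s$ leaves. For disjoint graphs $G,H$: $G\cup H$ is their disjoint union, $tG$ is the disjoint union of $t$ copies of $G$, and $G\vee H$ is obtained from $G\cup H$ by adding all edges between $V(G)$ and $V(H)$. $N_r(G)$ is the number of copies of $K_r$ in $G$. A block is a maximal connected subgraph without a cut vertex. $T(n,s)$ is the balanced complete $s$-partite graph on $n$ vertices; if $s\ge n$, $T(n,s)=K_n$. Let $\delta_k=\lfloor k/2\rfloor-1$. $H_n(m,k)=T(\delta_k,m-2)\vee I_{n-\delta_k}$ if $m\le \delta_k+2$; $H_n(m,k)=K_{\delta_k}\vee I_{n-\delta_k}$ if $\delta_k+2<m<k$ and $k$ is even; $H_n(m,k)=K_{\delta_k}\vee(I_{n-\delta_k-2}\cup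 K_2)$ if $\delta_k+2<m<k$ and $k$ is odd. $S_{a,n-a}$ is the double star on $n$ vertices obtained from stars on $a$ and on $n-a$ vertices by joining their centres. For $\delta_k\le m-2$: $G_1(n,k)=K_1\vee tK_{\delta_k}$ where $n=1+t\delta_k$, $t\ge1$ (the vertex of $K_1$ is its centre); for $k$ odd, $G_2(n,k)$ is obtained from disjoint $G_1(n_1,k)$, $G_1(n_2,k)$ by joining their centres, $n=n_1+n_2$; for $k$ odd, a graph $G_3(n,k)$ is any $n$-vertex graph obtained from $G_1(n-1,k)$ by replacing one block $K_{\delta_k+1}$ by a $K_m$-free block $B$ of order $\delta_k+2$ (sharing the centre as its cut vertex) such that the result has minimum degree at least $\delta_k$. $G_4(n)$ (resp. $G_5(n)$) is the $n$-vertex graph obtained from disjoint $G_1(n_1,7)$ and $K_{1,n_2-2}$ by joining the centre of $G_1(n_1,7)$ to all leaves (resp. all vertices) of $K_{1,n_2-2}$, where $n_2\ge4$, $n=n_1+n_2-1$. *)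

(* Defs.v *)
From HB Require Import structures.
From mathcomp Require Import all_boot.
Set Implicit Arguments. Unset Strict Implicit. Unset Printing Implicit Defensive.

(* All graphs built below are simple (symmetric, irreflexive) by construction;
   for arbitrary graphs we require [simple] explicitly. *)
Record graph := Graph { gV : finType; gadj : rel gV }.
Arguments gadj : clear implicits.

Definition simple (G : graph) : Prop :=
  symmetric (gadj G) /\ irreflexive (gadj G).

Definition clique (G : graph) (S : {set gV G}) : bool :=
  [forall x in S, forall y in S, (x != y) ==> gadj G x y].

Definition Nr (r : nat) (G : graph) : nat :=
  #|[set S : {set gV G} | (#|S| == r) && clique S]|.

Definition isomorphic (G H : graph) : Prop :=
  exists f : gV G -> gV H, bijective f /\ forall x y, gadj H (f x) (f y) = gadj G x y.

Definition degree (G : graph) (v : gV G) : nat := #|[set u | gadj G v u]|.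

Definition min_degree_ge (G : graph) (d : nat) : Prop :=
  forall v : gV G, d <= degree v.

Definition connected_on (G : graph) (A : {set gV G}) : Prop :=
  forall x y, x \in A -> y \in A ->
    connect [rel u v | [&& u \in A, v \in A & gadj G u v]] x y.

Definition is_block (G : graph) : Prop :=
  connected_on [set: gV G] /\ forall v : gV G, connected_on ([set: gV G] :\ v).

Definition Kg (n : nat) : graph := @Graph 'I_n (fun x y => x != y).
Definition Ig (n : nat) : graph := @Graph 'I_n (fun _ _ => false).

Definition gunion (G H : graph) : graph :=
  @Graph (gV G + gV H)%type (fun x y =>
    match x, y with
    | inl a, inl b => gadj G a b
    | inr a, inr b => gadj H a b
    | _, _ => false
    end).

Definition gjoin (G H : graph) : graph :=
  @Graph (gV G + gV H)%type (fun x y =>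
    match x, y with
    | inl a, inl b => gadj G a b
    | inr a, inr b => gadj H a b
    | _, _ => true
    end).

Definition copies (t : nat) (G : graph) : graph :=
  @Graph ('I_t * gV G)%type (fun x y => (x.1 == y.1) && gadj G x.2 y.2).

Definition attach (G H : graph) (c : gV G) (S : {set gV H}) : graph :=
  @Graph (gV G + gV H)%type (fun x y =>
    match x, y with
    | inl a, inl b => gadj G a b
    | inr a, inr b => gadj H a b
    | inl a, inr b => (a == c) && (b \in S)
    | inr b, inl a => (a == c) && (b \in S)
    end).

Definition link (G H : graph) (cx : gV G) (cy : gV H) : graph :=
  attach cx [set cy].

(* T(n,s): vertices 0..n-1, i ~ j iff i, j lie in different residue classes
   mod s (balanced complete s-partite; K_n when s >= n). *)
Definition Turan (n s : nat) : graph :=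
  @Graph 'I_n (fun i j => (i %% s) != (j %% s)).

Definition delta (k : nat) : nat := k./2 - 1.

Definition Hn (n m k : nat) : graph :=
  if m <= delta k + 2 then gjoin (Turan (delta k) (m - 2)) (Ig (n - delta k))
  else if ~~ odd k then gjoin (Kg (delta k)) (Ig (n - delta k))
  else gjoin (Kg (delta k)) (gunion (Ig (n - delta k - 2)) (Kg 2)).

Definition star (s : nat) : graph := gjoin (Kg 1) (Ig s).
Definition star_centre (s : nat) : gV (star s) := inl ord0.
Definition star_leaves (s : nat) : {set gV (star s)} :=
  [set x : gV (star s) | if x is inr _ then true else false].

(* double star S_{a,b}: stars on a and on b vertices with centres joined *)
Definition dstar (a b : nat) : graph :=
  link (star_centre (a - 1)) (star_centre (b - 1)).

(* G_1(n,k) = K_1 v tK_{delta_k}, n = 1 + t delta_k; centre = inl ord0 *)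
Definition G1 (t k : nat) : graph := gjoin (Kg 1) (copies t (Kg (delta k))).
Definition G1_centre (t k : nat) : gV (G1 t k) := inl ord0.

Definition G2 (t1 t2 k : nat) : graph := link (G1_centre t1 k) (G1_centre t2 k).

(* G_3: G_1(n-1,k) (with t blocks) where one block K_{delta_k+1} is replaced
   by the graph B (of order delta_k + 2), B's vertex c playing the centre. *)
Definition G3 (t k : nat) (B : graph) (c : gV B) : graph :=
  attach c [set: gV (copies (t - 1) (Kg (delta k)))].

Arguments G3 : clear implicits.
Definition G4 (t n2 : nat) : graph := attach (G1_centre t 7) (star_leaves (n2 - 2)).
Definition G5 (t n2 : nat) : graph :=
  attach (G1_centre t 7) [set: gV (star (n2 - 2))].

(* Main.v *)
Require Import Defs.
From mathcomp Require Import all_boot.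
From mathcomp Require Import zify.
Set Implicit Arguments. Unset Strict Implicit. Unset Printing Implicit Defensive.

Lemma Nr_sum r (G : graph) :
  Nr r G = \sum_(S : {set gV G}) ((#|S| == r) && clique S).
Proof.
rewrite /Nr -sum1_card big_mkcond /=; apply: eq_bigr => S _.
by rewrite inE; case: (_ && _).
Qed.

Lemma clique_imset (G H : graph) (f : gV G -> gV H) (S : {set gV G}) :
  injective f -> (forall x y, gadj H (f x) (f y) = gadj G x y) ->
  clique (f @: S) = clique S.
Proof.
move=> finj fadj; apply/idP/idP.
- move=> /forallP cl; apply/forallP => x; apply/implyP => xS.
  apply/forallP => y; apply/implyP => yS; apply/implyP => nxy.
  have := cl (f x); rewrite imset_f // => /forallP /(_ (f y)).
  rewrite imset_f //= (inj_eq finj) nxy /= fadj; exact.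
- move=> /forallP cl; apply/forallP => u; apply/implyP => /imsetP [x xS ->].
  apply/forallP => v; apply/implyP => /imsetP [y yS ->].
  rewrite (inj_eq finj) fadj; apply/implyP => nxy.
  by have := cl x; rewrite xS => /forallP /(_ y); rewrite yS nxy.
Qed.

Lemma iso_Nr r (G H : graph) : isomorphic G H -> Nr r G = Nr r H.
Proof.
case=> f [fbij fadj]; have finj := bij_inj fbij.
case: fbij => g fg gf.
rewrite !Nr_sum (reindex (fun S : {set gV G} => f @: S)) /=.
  apply: eq_bigr => S _; by rewrite card_imset // clique_imset.
exists (fun T : {set gV H} => g @: T) => T _; rewrite -imset_comp.
  by rewrite (eq_imset _ fg) imset_id.
by rewrite (eq_imset _ gf) imset_id.
Qed.

Lemma iso_sym (G H : graph) : isomorphic G H -> isomorphic H G.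
Proof.
case=> f [[g fg gf] fadj]; exists g; split; first by exists f.
by move=> x y; rewrite -fadj !gf.
Qed.

Lemma Nr_ext r (T : finType) (e1 e2 : rel T) : e1 =2 e2 ->
  Nr r (Graph e1) = Nr r (Graph e2).
Proof.
move=> e; apply: iso_Nr; exists id; split; first by exists id.
by move=> x y /=; rewrite e.
Qed.


Lemma cliqueP (G : graph) (S : {set gV G}) :
  reflect (forall x y, x \in S -> y \in S -> x != y -> gadj G x y) (clique S).
Proof.
apply: (iffP forallP) => [cl x y xS yS nxy | cl x].
  by have := cl x; rewrite xS => /forallP /(_ y); rewrite yS nxy.
apply/implyP => xS; apply/forallP => y; apply/implyP => yS; apply/implyP.
exact: cl.
Qed.

Definition sumg (G H : graph) (X : gV G -> gV H -> bool) : graph :=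
  @Graph (gV G + gV H)%type (fun x y =>
    match x, y with
    | inl a, inl b => gadj G a b
    | inr a, inr b => gadj H a b
    | inl a, inr b => X a b
    | inr b, inl a => X a b
    end).

Arguments sumg : clear implicits.
Definition comb (A B : finType) (SA : {set A}) (SB : {set B}) : {set A + B} :=
  [set x | match x with inl a => a \in SA | inr b => b \in SB end].

Lemma card_comb (A B : finType) (SA : {set A}) (SB : {set B}) :
  #|comb SA SB| = #|SA| + #|SB|.
Proof.
rewrite -!sum1_card big_sumType /=; congr (_ + _); apply: eq_bigl => a;
by rewrite inE.
Qed.

Definition crossb (A B : finType) (X : A -> B -> bool) (SA : {set A}) (SB : {set B}) :=
  [forall a in SA, forall b in SB, X a b].

Lemma clique_comb (G H : graph) X (SA : {set gV G}) (SB : {set gV H}) :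
  clique (G := sumg G H X) (comb SA SB) =
  [&& clique SA, clique SB & crossb X SA SB].
Proof.
apply/idP/idP.
- move/cliqueP => cl; apply/and3P; split.
  + apply/cliqueP => x y xS yS nxy.
    by have := cl (inl x) (inl y); rewrite !inE; apply.
  + apply/cliqueP => x y xS yS nxy.
    by have := cl (inr x) (inr y); rewrite !inE; apply.
  + apply/forallP => a; apply/implyP => aS; apply/forallP => b; apply/implyP => bS.
    by have := cl (inl a) (inr b); rewrite !inE; apply.
- case/and3P => /cliqueP clA /cliqueP clB /forallP cr.
  apply/cliqueP => [[a|b] [a'|b']]; rewrite !inE /= => h1 h2 ne.
  + by apply: clA => //; apply: contra ne => /eqP ->.
  + by have := cr a; rewrite h1 => /forallP /(_ b'); rewrite h2.
  + by have := cr a'; rewrite h2 => /forallP /(_ b); rewrite h1.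
  + by apply: clB => //; apply: contra ne => /eqP ->.
Qed.

Lemma Nr_sumg r (G H : graph) X :
  Nr r (sumg G H X) = \sum_(SA : {set gV G}) \sum_(SB : {set gV H})
     [&& #|SA| + #|SB| == r, clique SA, clique SB & crossb X SA SB].
Proof.
rewrite Nr_sum (reindex (fun p : {set gV G} * {set gV H} => comb p.1 p.2)) /=.
  rewrite pair_big /=; apply: eq_bigr => p _.
  by rewrite card_comb clique_comb.
exists (fun S : {set gV (sumg G H X)} => ([set a | inl a \in S], [set b | inr b \in S])).
  move=> [SA SB] _ /=; congr pair; apply/setP => x; by rewrite !inE.
move=> S _; apply/setP => [[a|b]]; by rewrite !inE.
Qed.


Lemma sum_pick (F : nat -> nat) r (a : nat) :
  \sum_(i < r.+1) (a == i :> nat) * F i = if a <= r then F a else 0.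
Proof.
rewrite (eq_bigr (fun i : 'I_r.+1 => if (i == a :> nat) then F i else 0)); last first.
  by move=> i _; rewrite eq_sym; case: (_ == _); rewrite ?mul1n ?mul0n.
by rewrite -big_mkcond big_ord1_eq ltnS.
Qed.

Lemma sum_pick2 (F : nat -> nat) r j :
  \sum_(i < r.+1) F i * (r - i == j) = if j <= r then F (r - j) else 0.
Proof.
case: (leqP j r) => hj.
  have := sum_pick F r (r - j); rewrite leq_subr => <-; apply: eq_bigr => i _.
  have -> : (r - i == j) = (r - j == i).
    have := ltn_ord i; rewrite ltnS => hi.
    by apply/eqP/eqP => ?; lia.
  by rewrite mulnC.
rewrite big1 // => i _.
have -> : (r - i == j) = false by apply/eqP; lia.
by rewrite muln0.
Qed.

Lemma clique0 (G : graph) : clique (@set0 (gV G)).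
Proof. by apply/cliqueP => x y; rewrite inE. Qed.

Lemma clique1 (G : graph) (v : gV G) : clique [set v].
Proof. by apply/cliqueP => x y; rewrite !inE => /eqP -> /eqP ->; rewrite eqxx. Qed.

Lemma crossb0l (A B : finType) X (SB : {set B}) : crossb X (@set0 A) SB.
Proof. by apply/forallP => a; rewrite inE. Qed.
Lemma crossb0r (A B : finType) X (SA : {set A}) : crossb X SA (@set0 B).
Proof. by apply/forallP => a; apply/implyP => _; apply/forallP => b; rewrite inE. Qed.

Lemma sum_eq_pick (T : finType) (y0 : T) (b : nat) :
  \sum_(y : T) (y == y0) * b = b.
Proof.
rewrite (bigD1 y0) //= eqxx mul1n big1 ?addn0 // => y /negbTE ->.
by rewrite mul0n.
Qed.

Lemma Nr_sumg_split r (G H : graph) X : 0 < r ->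
  Nr r (sumg G H X) = Nr r G + Nr r H +
   \sum_(SA : {set gV G}) \sum_(SB : {set gV H})
     [&& SA != set0, SB != set0, #|SA| + #|SB| == r, clique SA, clique SB & crossb X SA SB].
Proof.
move=> r0; rewrite Nr_sumg.
have -> : Nr r G = \sum_(SA : {set gV G}) \sum_(SB : {set gV H})
   (SB == set0) * ((#|SA| == r) && clique SA).
  by rewrite Nr_sum; apply: eq_bigr => SA _; rewrite sum_eq_pick.
have -> : Nr r H = \sum_(SA : {set gV G}) \sum_(SB : {set gV H})
   (SA == set0) * ((#|SB| == r) && clique SB).
  by rewrite exchange_big Nr_sum; apply: eq_bigr => SB _ /=; rewrite sum_eq_pick.
rewrite -!big_split; apply: eq_bigr => SA _; rewrite -!big_split; apply: eq_bigr => SB _ /=.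
case: (boolP (SA == set0)) => [/eqP-> | nA]; case: (boolP (SB == set0)) => [/eqP -> | nB];
  rewrite ?cards0 ?clique0 ?crossb0l ?crossb0r /=.
- by case: r r0.
- by rewrite ?mul0n ?mul1n ?add0n ?addn0 ?andbT.
- by rewrite ?mul0n ?mul1n ?add0n ?addn0 ?andbT.
- by rewrite ?mul0n ?mul1n ?add0n ?addn0 ?andbT.
Qed.


Lemma crossbT (A B : finType) (SA : {set A}) (SB : {set B}) :
  crossb (fun _ _ => true) SA SB.
Proof. by apply/forallP => a; apply/implyP => _; apply/forallP => b; apply/implyP. Qed.

Lemma Nr_join r (G H : graph) :
  Nr r (gjoin G H) = \sum_(i < r.+1) Nr i G * Nr (r - i) H.
Proof.
rewrite (_ : gjoin G H = sumg G H (fun _ _ => true)) // Nr_sumg.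
symmetry.
rewrite (eq_bigr (fun i : 'I_r.+1 => \sum_(SA : {set gV G}) \sum_(SB : {set gV H})
   ((#|SA| == i) && clique SA) * ((#|SB| == r - i) && clique SB))); last first.
  move=> i _; rewrite !Nr_sum big_distrl /=; apply: eq_bigr => SA _.
  by rewrite big_distrr.
rewrite exchange_big; apply: eq_bigr => SA _; rewrite exchange_big.
apply: eq_bigr => SB _ /=; rewrite crossbT andbT.
rewrite (eq_bigr (fun i : 'I_r.+1 => (#|SA| == i :> nat) *
   (clique SA * ((#|SB| == r - i) && clique SB)))); last first.
  by move=> i _; case: (_ == _); case: (clique SA); rewrite ?mul1n ?mul0n.
rewrite (sum_pick (fun i => clique SA * ((#|SB| == r - i) && clique SB))); case: leqP => h; case: (clique SA); case: (clique SB);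
  rewrite /= ?andbF ?muln0 ?mul1n //.
- by have -> : (#|SA| + #|SB| == r) = (#|SB| == r - #|SA|) by apply/eqP/eqP; lia.
- by apply/eqP; lia.
Qed.

Lemma Nr_union r (G H : graph) : 0 < r ->
  Nr r (gunion G H) = Nr r G + Nr r H.
Proof.
move=> r0; rewrite (_ : gunion G H = sumg G H (fun _ _ => false)) // Nr_sumg_split //.
rewrite big1 ?addn0 // => SA _; rewrite big1 // => SB _.
case: (boolP (SA == set0)) => //= /set0Pn [a aA].
case: (boolP (SB == set0)) => //= /set0Pn [b bB].
by rewrite (negbTE (_ : ~~ crossb _ SA SB)) ?andbF //; apply/negP => /forallP /(_ a);
  rewrite aA => /forallP /(_ b); rewrite bB.
Qed.

Definition NrIn j (H : graph) (S : {set gV H}) :=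
  \sum_(T : {set gV H}) [&& T \subset S, #|T| == j & clique T].

Arguments NrIn : clear implicits.
Lemma crossb1 (A B : finType) (c : A) (S : {set B}) (SB : {set B}) :
  crossb (fun a b => (a == c) && (b \in S)) [set c] SB = (SB \subset S).
Proof.
apply/forallP/subsetP => [h b bB | h a].
  by have := h c; rewrite inE eqxx => /forallP /(_ b); rewrite bB /= ?eqxx.
apply/implyP; rewrite inE => /eqP ->; apply/forallP => b; apply/implyP => bB.
by rewrite eqxx h.
Qed.

Lemma Nr_attach r (G H : graph) (c : gV G) (S : {set gV H}) : 1 < r ->
  Nr r (attach c S) = Nr r G + Nr r H + NrIn r.-1 H S.
Proof.
move=> r1; rewrite (_ : attach c S = sumg G H (fun a b => (a == c) && (b \in S))) //.
rewrite Nr_sumg_split ?(ltn_trans _ r1) //; congr (_ + _).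
rewrite (eq_bigr (fun SA => (SA == [set c]) * NrIn r.-1 H S)); first by rewrite sum_eq_pick.
move=> SA _; rewrite /NrIn big_distrr /=; apply: eq_bigr => SB _.
case: (boolP (SA == [set c])) => [/eqP -> | nA].
  rewrite mul1n cards1 clique1 crossb1.
  case: (boolP (SB == set0)) => [/eqP -> | nB] /=.
    rewrite cards0 sub0set /=; case: (r) r1 => [|[|r2]] // _; rewrite andbF ?andFb // .

  rewrite (_ : (1 + #|SB| == r) = (#|SB| == r.-1)); last by apply/eqP/eqP; lia.
  rewrite (_ : [set c] != set0) /=; last by apply/set0Pn; exists c; rewrite inE.
  by case: (SB \subset S); case: (_ == _); case: (clique SB).
rewrite mul0n; case: (boolP (SA != set0)) => //= nA0; case: (boolP (SB != set0)) => //= nB.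
case: and4P => // [[_ _ _ cr]]; exfalso.
move/negP: nA; apply; rewrite eqEcard cards1 card_gt0 nA0 andbT.
case/set0Pn: nB => b bB; apply/subsetP => a aA; rewrite inE.
by move/forallP: cr => /(_ a); rewrite aA => /forallP /(_ b); rewrite bB => /andP [].
Qed.


Lemma Nr0 (G : graph) : Nr 0 G = 1.
Proof.
rewrite Nr_sum (eq_bigr (fun S => (S == set0) * 1)) ?sum_eq_pick // => S _.
rewrite cards_eq0; case: eqP => [->|]; by rewrite ?clique0.
Qed.

Lemma Nr_all r (G : graph) : (forall S : {set gV G}, #|S| = r -> clique S) ->
  Nr r G = 'C(#|gV G|, r).
Proof.
move=> h; rewrite /Nr -card_draws; apply: eq_card => S; rewrite !inE.
by case: eqP => //= /h.
Qed.

Lemma Nr_none r (G : graph) : (forall S : {set gV G}, #|S| = r -> ~~ clique S) ->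
  Nr r G = 0.
Proof.
move=> h; rewrite Nr_sum big1 // => S _; case: eqP => //= /h /negbTE -> //.
Qed.

Lemma Nr_K r n : Nr r (Kg n) = 'C(n, r).
Proof.
rewrite Nr_all ?card_ord // => S _; apply/cliqueP => x y _ _ //.
Qed.

Lemma Nr_I j n : Nr j (Ig n) = (j == 0) + n * (j == 1).
Proof.
case: j => [|[|j]]; first by rewrite Nr0 /= muln0.
  rewrite Nr_all ?card_ord ?bin1 ?muln1 // => S /eqP /cards1P [x ->].
  exact: clique1.
rewrite Nr_none ?muln0 // => S hS; apply/negP => /cliqueP cl.
have : 1 < #|S| by rewrite hS.
by case/card_gt1P => x [y [xS yS nxy]]; have := cl x y xS yS nxy.
Qed.

Lemma Nr_turan r d s : d <= s -> Nr r (Turan d s) = 'C(d, r).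
Proof.
move=> ds; rewrite -Nr_K /Turan /Kg; apply: Nr_ext => i j /=.
have hi := ltn_ord i; have hj := ltn_ord j.
rewrite !modn_small ?(leq_trans _ ds) //.
Qed.

Lemma iso_join_swap (G H : graph) : isomorphic (gjoin G H) (gjoin H G).
Proof.
exists (fun x => match x with inl a => inr a | inr b => inl b end); split.
  by exists (fun x => match x with inl a => inr a | inr b => inl b end); case.
by case=> a; case=> b.
Qed.

Lemma Nr_join_swap r (G H : graph) : Nr r (gjoin G H) = Nr r (gjoin H G).
Proof. exact/iso_Nr/iso_join_swap. Qed.

Lemma Nr_join3 r (G H : graph) p q w :
  (forall j, Nr j H = (j == 0) * p + (j == 1) * q + (j == 2) * w) ->
  Nr r (gjoin G H) = p * Nr r G + (if 1 <= r then q * Nr (r - 1) G else 0)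
     + (if 2 <= r then w * Nr (r - 2) G else 0).
Proof.
move=> hH; rewrite Nr_join.
rewrite (eq_bigr (fun i : 'I_r.+1 => Nr i G * p * (r - i == 0) + Nr i G * q * (r - i == 1)
   + Nr i G * w * (r - i == 2))); last first.
  move=> i _; rewrite hH; lia.
rewrite !big_split /=.
rewrite (sum_pick2 (fun i => Nr i G * p)) (sum_pick2 (fun i => Nr i G * q))
  (sum_pick2 (fun i => Nr i G * w)) /= subn0.
by rewrite mulnC; congr (_ + _ + _); case: ifP => //; rewrite mulnC.
Qed.

Lemma iso_copiesS t (G : graph) : isomorphic (copies t.+1 G) (gunion (copies t G) G).
Proof.
pose f (x : gV (copies t.+1 G)) : gV (gunion (copies t G) G) :=
  match unlift ord_max x.1 with Some j => inl (j, x.2) | None => inr x.2 end.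
pose g (y : gV (gunion (copies t G) G)) : gV (copies t.+1 G) :=
  match y with inl z => (lift ord_max z.1, z.2) | inr v => (ord_max, v) end.
exists f; split.
  exists g.
    by case=> i v; rewrite /f /g /=; case: unliftP => [j ->|->].
  by case=> [[j v]|v]; rewrite /f /g /= ?liftK ?unlift_none.
case=> i v [i' v']; rewrite /f /=.
case: unliftP => [j ->|->]; case: unliftP => [j' ->|->] //=.
- by rewrite (inj_eq (@lift_inj _ _)).
- by rewrite eq_sym (negbTE (neq_lift _ _)).
- by rewrite (negbTE (neq_lift _ _)).
- by rewrite eqxx.
Qed.

Lemma Nr_copies r t (G : graph) : 0 < r -> Nr r (copies t G) = t * Nr r G.
Proof.
move=> r0; elim: t => [|t IH].
  rewrite Nr_none // => S hS; exfalso.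
  have := subset_leq_card (subsetT S); rewrite cardsT card_prod card_ord mul0n.
  by rewrite hS; case: (r) r0.
by rewrite (iso_Nr _ (iso_copiesS t G)) Nr_union // IH mulSn addnC.
Qed.


Lemma NrIn_T j (H : graph) : NrIn j H setT = Nr j H.
Proof. by rewrite /NrIn Nr_sum; apply: eq_bigr => T _; rewrite subsetT. Qed.

Lemma NrIn_le j (H : graph) S : NrIn j H S <= Nr j H.
Proof.
rewrite /NrIn Nr_sum; apply: leq_sum => T _.
by case: (T \subset S).
Qed.

Lemma NrIn_1 j (H : graph) (v : gV H) : 0 < j -> NrIn j H [set v] = (j == 1).
Proof.
move=> j0; rewrite /NrIn (eq_bigr (fun T => (T == [set v]) * (j == 1))) ?sum_eq_pick //.
move=> T _; case: (boolP (T == [set v])) => [/eqP -> | nT].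
  by rewrite subxx cards1 clique1 mul1n andbT eq_sym.
rewrite mul0n; case: (boolP (T \subset [set v])) => //= sT.
case: (boolP (#|T| == j)) => //= /eqP hT; exfalso.
move/negP: nT; apply; rewrite eqEcard sT cards1 hT //.
Qed.

Lemma Nr_K1 j : Nr j (Kg 1) = (j == 0) * 1 + (j == 1) * 1 + (j == 2) * 0.
Proof. by rewrite Nr_K; case: j => [|[|j]] //=; rewrite bin_small // muln0 !addn0. Qed.

Lemma Nr_G1 r t k : 1 < r ->
  Nr r (G1 t k) = t * 'C(delta k, r) + t * 'C(delta k, r - 1).
Proof.
move=> r1; rewrite /G1 Nr_join_swap (Nr_join3 _ _ Nr_K1) (ltnW r1) r1.
rewrite mul0n addn0 !mul1n !Nr_copies ?subn_gt0 ?(ltnW r1) // !Nr_K //.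
Qed.

Lemma Nr_Ig3 n j : Nr j (Ig n) = (j == 0) * 1 + (j == 1) * n + (j == 2) * 0.
Proof. rewrite Nr_I; lia. Qed.

Lemma Nr_joinI r (G : graph) n : 0 < r ->
  Nr r (gjoin G (Ig n)) = Nr r G + n * Nr (r - 1) G.
Proof.
move=> r0; rewrite (Nr_join3 _ _ (Nr_Ig3 n)) r0 mul1n.
by rewrite mul0n; case: ifP => _; rewrite addn0.
Qed.

Lemma Nr_U3 a j : Nr j (gunion (Ig a) (Kg 2)) =
  (j == 0) * 1 + (j == 1) * (a + 2) + (j == 2) * 1.
Proof.
case: j => [|j]; first by rewrite Nr0.
rewrite Nr_union // Nr_I Nr_K; case: j => [|[|[|j]]] /=; rewrite ?bin1 ?binn ?bin_small //; lia.
Qed.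

Lemma Nr_Hn r n m k : 1 < r -> delta k + 2 <= m -> delta k + 2 <= n ->
  Nr r (Hn n m k) = 'C(delta k, r) + (n - delta k) * 'C(delta k, r - 1)
     + (if (delta k + 2 < m) && odd k then 'C(delta k, r - 2) else 0).
Proof.
move=> r1 dm dn; rewrite /Hn.
case: (leqP m (delta k + 2)) => hm /=.
  rewrite Nr_joinI ?(ltnW r1) // !Nr_turan; last 2 first.
    by lia. by lia.
  by rewrite addn0.
case: (odd k) => /=.
  rewrite (Nr_join3 _ _ (Nr_U3 _)) (ltnW r1) r1 !Nr_K.
  have -> : n - delta k - 2 + 2 = n - delta k by lia.
  lia.
by rewrite Nr_joinI ?(ltnW r1) // !Nr_K addn0.
Qed.

Lemma Nr_star j s : Nr j (star s) = 'C(1, j) + (if 1 <= j then s * 'C(1, j - 1) else 0).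
Proof.
rewrite /star (Nr_join3 _ _ (Nr_Ig3 s)) !Nr_K mul1n.
by rewrite mul0n if_same addn0.
Qed.


Definition isom (G H : graph) (f : gV G -> gV H) :=
  bijective f /\ forall x y, gadj H (f x) (f y) = gadj G x y.

Lemma isom_iso (G H : graph) (f : gV G -> gV H) : isom f -> isomorphic G H.
Proof. by exists f. Qed.

Definition summap (A B A' B' : Type) (f : A -> A') (g : B -> B') (x : A + B) : A' + B' :=
  match x with inl a => inl (f a) | inr b => inr (g b) end.

Lemma isom_sumg (G H G' H' : graph) X X' (f : gV G -> gV G') (g : gV H -> gV H') :
  isom f -> isom g -> (forall a b, X' (f a) (g b) = X a b) ->
  isom (G := sumg G H X) (H := sumg G' H' X') (summap f g).
Proof.
move=> [[f' ff' f'f] fa] [[g' gg' g'g] ga] hX; split.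
  exists (summap f' g'); case=> ? /=; by rewrite ?ff' ?gg' ?f'f ?g'g.
by case=> a; case=> b /=.
Qed.

Lemma isom_K1 (e : rel 'I_1) : irreflexive e -> isom (G := Kg 1) (H := Graph e) id.
Proof.
move=> ire; split; first by exists id.
by move=> x y /=; rewrite !ord1 ire.
Qed.

Lemma isom_copies1 t : isom (G := copies t (Kg 1)) (H := Ig t) fst.
Proof.
split; last by move=> [i a] [j b] /=; rewrite !ord1 eqxx andbF.
by exists (fun i => (i, ord0)) => [[i a]|i] //=; rewrite ord1.
Qed.

Lemma irrK1 : irreflexive (fun x y : 'I_1 => x != y).
Proof. by move=> x; rewrite eqxx. Qed.

Lemma iso_G1_H t (e : rel 'I_1) : irreflexive e ->
  isomorphic (gjoin (Kg 1) (copies t (Kg 1))) (gjoin (Graph e) (Ig t)).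
Proof.
move=> ire; exact: isom_iso (@isom_sumg (Kg 1) (copies t (Kg 1)) (Graph e) (Ig t) (fun _ _ => true)
  (fun _ _ => true) _ _ (isom_K1 ire) (isom_copies1 t) (fun _ _ => erefl)).
Qed.

Lemma iso_G2_dstar t1 t2 :
  isomorphic (G2 t1 t2 5) (dstar t1.+1 t2.+1).
Proof.
have hG : forall t, isom (G := G1 t 5) (H := star t) (summap id fst).
  move=> t; exact: (@isom_sumg (Kg 1) (copies t (Kg 1)) (Kg 1) (Ig t) (fun _ _ => true)
  (fun _ _ => true) _ _ (isom_K1 irrK1) (isom_copies1 t) (fun _ _ => erefl)).
rewrite /dstar !subSS !subn0.
refine (isom_iso (@isom_sumg (G1 t1 5) (G1 t2 5) (star t1) (star t2)
   (fun a b => (a == G1_centre t1 5) && (b \in [set G1_centre t2 5]))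
   (fun a b => (a == star_centre t1) && (b \in [set star_centre t2]))
   _ _ (hG t1) (hG t2) _)).
move=> a b; rewrite !inE.
by case: a => [a|[i a]]; case: b => [b|[j b]] //=; rewrite ?ord1.
Qed.


Lemma sum_card (T : finType) (P : pred T) : \sum_(x : T) (P x : nat) = #|[set x | P x]|.
Proof.
rewrite -sum1_card [in RHS]big_mkcond /=; apply: eq_bigr => x _; rewrite inE.
by case: (P x).
Qed.

Lemma Nr_le_draws r (G : graph) : Nr r G <= 'C(#|gV G|, r).
Proof.
rewrite /Nr -card_draws; apply: subset_leq_card; apply/subsetP => S.
by rewrite !inE => /andP [].
Qed.

Lemma Nr_le_nonedge r (G : graph) (x y : gV G) : x != y -> ~~ gadj G x y ->
  Nr r G <= 'C(#|gV G| - 1, r) + 'C(#|gV G| - 2, r - 1).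
Proof.
move=> nxy nadj.
pose A1 := [set S : {set gV G} | (S \subset [set~ x]) && (#|S| == r)].
pose A2 := [set S : {set gV G} | [&& x \in S, y \notin S & #|S| == r]].
pose D := ~: [set x; y].
pose A3 := [set T : {set gV G} | (T \subset D) && (#|T| == r - 1)].
have h1 : Nr r G <= #|A1| + #|A2|.
  rewrite Nr_sum -!sum_card -big_split /=; apply: leq_sum => S _.
  case: (boolP (#|S| == r)) => //= hS; rewrite ?andbT.
  case: (boolP (clique S)) => //= cl.
  case: (boolP (x \in S)) => xS /=.
    case: (boolP (y \in S)) => yS //=; last by rewrite addn1.
    by move/cliqueP: cl => /(_ x y xS yS nxy); rewrite (negbTE nadj).
  suff -> : S \subset [set~ x] by [].
  by apply/subsetP => z zS; rewrite !inE; apply: contraNneq xS => <-.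
have hA1 : #|A1| = 'C(#|gV G| - 1, r).
  by rewrite /A1 cards_draws cardsC1 subn1.
have hA3 : #|A3| = 'C(#|gV G| - 2, r - 1).
  rewrite /A3 cards_draws /D.
  have := cardsC [set x; y]; rewrite cards2 nxy => <-; congr 'C(_, _); lia.
have hA2 : #|A2| <= #|A3|.
  rewrite -(@card_in_imset _ _ (fun S => S :\ x)).
    apply: subset_leq_card; apply/subsetP => T /imsetP [S].
    rewrite inE => /and3P [xS yS /eqP hS] ->.
    rewrite inE; apply/andP; split.
      apply/subsetP => z; rewrite !inE => /andP [zx zS].
      by rewrite negb_or zx /=; apply: contraNneq yS => <-.
    by have := cardsD1 x S; rewrite xS hS; move=> ->; rewrite add1n subn1.
  move=> S S'; rewrite !inE => /and3P [xS _ _] /and3P [xS' _ _] e.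
  by rewrite -(setD1K xS) -(setD1K xS') e.
lia.
Qed.


Lemma block3 (B : graph) : simple B -> #|gV B| = 3 -> is_block B ->
  forall u v, u != v -> gadj B u v.
Proof.
move=> [symB irrB] card3 [_ blk] u v nuv; apply/negPn/negP => nadj.
have : #|~: [set u; v]| = 1.
  by have := cardsC [set u; v]; rewrite cards2 nuv card3; lia.
move/eqP/cards1P => [z hz].
have zC : z \in ~: [set u; v] by rewrite hz inE.
have := blk z u v; rewrite !inE.
have uz : u != z by apply: contraTneq zC => ->; rewrite !inE eqxx.
have vz : v != z by apply: contraTneq zC => ->; rewrite !inE eqxx orbT.
rewrite uz vz => /(_ isT isT) /connectP [[|w p]] /=.
  by move=> _ e; move/eqP: nuv; rewrite -e.
case/andP => /and3P [_]; rewrite !inE => /andP [wz _] uw _ _.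
have : w \in ~: [set u; v].
  rewrite !inE negb_or; apply/andP; split.
    by apply: contraTneq uw => ->; rewrite irrB.
  by apply: contraTneq uw => ->.
by rewrite hz inE (negbTE wz).
Qed.

Lemma iso_G3 (B : graph) (c : gV B) s : simple B -> #|gV B| = 3 ->
  (forall u v, u != v -> gadj B u v) ->
  isomorphic (attach c [set: gV (copies s (Kg 1))]) (gjoin (Kg 1) (gunion (Ig s) (Kg 2))).
Proof.
move=> [symB irrB] card3 cplt.
have adjE : forall u v, gadj B u v = (u != v).
  move=> u v; case: (eqVneq u v) => [->|/cplt //]; exact: irrB.
have : 1 < #|[set~ c]| by rewrite cardsC1 card3.
case/card_gt1P => x [y [xc yc nxy]]; rewrite !inE in xc yc.
pose pick (j : 'I_2) := if j == ord0 then x else y.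
have pickc : forall j, (pick j == c) = false.
  by move=> j; rewrite /pick; case: (j == ord0); apply/negbTE.
have pick_inj : injective pick.
  move=> j j'; rewrite /pick.
  case: (eqVneq j ord0) => [->|j0]; case: (eqVneq j' ord0) => [->|j'0] //.
  - by move/eqP; rewrite (negbTE nxy).
  - by move=> e; move: nxy; rewrite e eqxx.
  - move=> _; apply/val_inj; have := ltn_ord j; have := ltn_ord j'.
    move: j0 j'0; rewrite -!(inj_eq val_inj) /=; lia.
pose g (z : gV (gjoin (Kg 1) (gunion (Ig s) (Kg 2)))) :
   gV (attach c [set: gV (copies s (Kg 1))]) :=
  match z with
  | inl _ => inl c
  | inr (inl i) => inr (i, ord0)
  | inr (inr j) => inl (pick j)
  end.
have ginj : injective g.
  move=> [a|[i|j]] [a'|[i'|j']] //= e.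
  - by rewrite !ord1.
  - by case: e => /eqP; rewrite eq_sym pickc.
  - by case: e => ->.
  - by case: e => /eqP; rewrite pickc.
  - by case: e => /pick_inj ->.
apply: iso_sym; exists g; split.
  have hc : #|gV (gjoin (Kg 1) (gunion (Ig s) (Kg 2)))| >= #|gV (attach c [set: gV (copies s (Kg 1))])|.
    by rewrite /= !card_sum card_prod !card_ord card3; lia.
  exact: (inj_card_bij ginj hc).
move=> [a|[i|j]] [a'|[i'|j']] //=; rewrite ?adjE ?eqxx ?pickc ?inE ?(inj_eq pick_inj) //. 
- by rewrite (ord1 a) (ord1 a').
- by rewrite eq_sym pickc.
- by rewrite andbF.
Qed.


Lemma binkey d r : 1 < r -> r <= d.+1 ->
  [/\ 'C(d, r) + (1 < d) <= (d - 1) * 'C(d, r - 1), 0 < 'C(d, r - 1) & 0 < 'C(d, r - 2)].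
Proof.
case: r => [|[|s]] // _ hs.
rewrite !subSS !subn0 subn1 /= !bin_gt0.
have -> : s.+1 <= d by lia.
have -> : s <= d by lia.
split => //.
have hm := mul_bin_left d s.+1.
have hY : 0 < 'C(d, s.+1) by rewrite bin_gt0; lia.
move: hm hY; set X := 'C(d, s.+2); set Y := 'C(d, s.+1) => hm hY.
case: (ltnP 1 d) => hd /=.
  have h1 : (d - s.+1) * Y <= (d - 1) * Y by apply: leq_mul => //; lia.
  nia.
have -> : d = 1 by lia.
have : X = 0 by rewrite /X bin_small //; lia.
lia.
Qed.

Lemma iff_strict (G H : graph) r (P : Prop) : Nr r G < Nr r H ->
  (Nr r G = Nr r H <-> P /\ isomorphic G H).
Proof.
move=> lt; split => [e|[_ /(iso_Nr r) e]]; by move: lt; rewrite e ltnn.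
Qed.

Lemma iff_eq (G H : graph) r (P : Prop) : P -> isomorphic G H ->
  (Nr r G = Nr r H <-> P /\ isomorphic G H).
Proof. by move=> p i; split => [_|_]; [split | apply: iso_Nr]. Qed.

Lemma part1_i1 k m r : m < k -> 1 < r <= delta k + 1 -> delta k <= m - 2 ->
    (forall t : nat, 2 <= t ->
      let n := 1 + t * delta k in
      Nr r (G1 t k) <= Nr r (Hn n m k) /\
      (Nr r (G1 t k) = Nr r (Hn n m k) <-> r = 2 /\ isomorphic (G1 t k) (Hn n m k))).
Proof.
move=> hmk /andP [r1 rd] dm t t2 n.
have d1 : 1 <= delta k by lia.
have dm2 : delta k + 2 <= m by lia.
have dn : delta k + 2 <= n by rewrite /n; nia.
have rd' : r <= (delta k).+1 by lia.
have [key Y0 Z0] := binkey r1 rd'.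
have eG := Nr_G1 t k r1.
have eH := @Nr_Hn r n m k r1 dm2 dn.
have hnd : n - delta k = 1 + (t - 1) * delta k by rewrite /n; nia.
rewrite hnd in eH.
move: key Y0 Z0 eG eH.
set d := delta k; set X := 'C(d, r); set Y := 'C(d, r - 1); set Z := 'C(d, r - 2).
set E := (if _ then _ else _) => key Y0 Z0 eG eH.
have hE : E = 0 \/ 0 < E by rewrite /E; case: ifP => _; lia.
have hk : (t - 1) * (X + (1 < d)) <= (t - 1) * ((d - 1) * Y) by apply: leq_mul.
case: (boolP ((1 < d) || (0 < E))) => st.
  have lt : Nr r (G1 t k) < Nr r (Hn n m k).
    rewrite eG eH; case/orP: st => h; rewrite ?h /= in hk *; nia.
  split; first exact: ltnW.
  exact: iff_strict.
have hd : d = 1 by move: st; rewrite negb_or; lia.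
have E0 : E = 0 by move: st; rewrite negb_or; lia.
have r2 : r = 2 by lia.
have ise : isomorphic (G1 t k) (Hn n m k).
  rewrite /G1 /Hn -/d hd.
  have -> : n - 1 = t by rewrite /n -/d hd; lia.
  case: ifP => hm.
    by apply: iso_G1_H => i /=; rewrite eqxx.
  move: E0; rewrite /E hd.
  have -> : (1 + 2 < m) by lia.
  case: (odd k) => /= [E0|_]; first by move: Z0; rewrite E0.
  exact: iso_G1_H irrK1.
have e := iso_Nr r ise.
split; first by rewrite e.
exact: iff_eq.
Qed.

Lemma delta1_k k : delta k = 1 -> odd k -> k = 5.
Proof.
rewrite /delta => h o.
have : k./2 = 2 by lia.
move=> h2; have := odd_double_half k; rewrite o h2 /=; lia.
Qed.

Lemma Nr_G2 r t1 t2 k : 1 < r ->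
  Nr r (G2 t1 t2 k) = Nr r (G1 t1 k) + Nr r (G1 t2 k) + (r == 2).
Proof.
move=> r1; rewrite /G2 /link Nr_attach // NrIn_1; last by case: (r) r1 => [|[|]].
by case: (r) r1 => [|[|[|r']]].
Qed.

Lemma part1_i2 k m r : m < k -> 1 < r <= delta k + 1 -> delta k <= m - 2 ->
    (odd k -> forall t1 t2 : nat, 1 <= t1 -> 1 <= t2 ->
      let n := (1 + t1 * delta k) + (1 + t2 * delta k) in
      Nr r (G2 t1 t2 k) <= Nr r (Hn n m k) /\
      (Nr r (G2 t1 t2 k) = Nr r (Hn n m k) <->
         [/\ k = 5, m = 3 &
             exists a : nat, 1 <= a < n /\ isomorphic (G2 t1 t2 k) (dstar a (n - a))])).
Proof.
move=> hmk /andP [r1 rd] dm ok t1 t2 t1p t2p n.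
have d1 : 1 <= delta k by lia.
have dm2 : delta k + 2 <= m by lia.
have dn : delta k + 2 <= n by rewrite /n; nia.
have rd' : r <= (delta k).+1 by lia.
have [key Y0 Z0] := binkey r1 rd'.
have eG := Nr_G2 t1 t2 k r1.
rewrite !Nr_G1 // in eG.
have eH := @Nr_Hn r n m k r1 dm2 dn.
have hnd : n - delta k = 2 + (t1 + t2 - 1) * delta k by rewrite /n; nia.
rewrite hnd in eH.
move: key Y0 Z0 eG eH.
set d := delta k; set X := 'C(d, r); set Y := 'C(d, r - 1); set Z := 'C(d, r - 2).
set E := (if _ then _ else _) => key Y0 Z0 eG eH.
have hE : E = 0 \/ 0 < E by rewrite /E; case: ifP => _; lia.
have hk : (t1 + t2 - 1) * (X + (1 < d)) <= (t1 + t2 - 1) * ((d - 1) * Y) by apply: leq_mul.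
have r2b : (r == 2) <= Y by case: (r == 2).
case: (boolP ((1 < d) || (0 < E))) => st.
  have lt : Nr r (G2 t1 t2 k) < Nr r (Hn n m k).
    rewrite eG eH; case/orP: st => h; rewrite ?h /= in hk *; nia.
  split; first exact: ltnW.
  split => [e | [k5 m3 _]]; first by move: lt; rewrite e ltnn.
  move: st; rewrite /E /d k5 m3 /=.
  by [].
have hd : d = 1 by move: st; rewrite negb_or; lia.
have E0 : E = 0 by move: st; rewrite negb_or; lia.
have r2 : r = 2 by lia.
have k5 : k = 5 by apply: delta1_k.
have m3 : m = 3.
  move: E0; rewrite /E ok andbT; case: ifP => h; last by lia.
  by move=> e; move: Z0; rewrite e.
have X0 : X = 0 by rewrite /X bin_small // hd r2.
have Y1 : Y = 1 by rewrite /Y hd r2.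
split.
  by rewrite eG eH X0 Y1 E0 hd r2 /=; lia.
split => [_|_]; last by rewrite eG eH X0 Y1 E0 hd r2 /=; lia.
split => //; exists t1.+1; split.
  by rewrite /n -/d hd; lia.
have -> : n - t1.+1 = t2.+1 by rewrite /n -/d hd; lia.
rewrite k5; exact: iso_G2_dstar.
Qed.

Lemma pascal2 d r : 1 < r ->
  'C(d.+2, r) = 'C(d, r) + 2 * 'C(d, r - 1) + 'C(d, r - 2) /\
  'C(d.+1, r) = 'C(d, r) + 'C(d, r - 1).
Proof.
case: r => [|[|s]] // _; rewrite !subSS !subn0 /= !binS; lia.
Qed.

Lemma nonclique_pair (G : graph) (S : {set gV G}) : ~~ clique S ->
  exists x y, x != y /\ ~~ gadj G x y.
Proof.
move/forallPn => [x]; rewrite negb_imply => /andP [_ /forallPn [y]].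
rewrite !negb_imply => /andP [_ /andP [nxy nadj]]; by exists x, y.
Qed.

Lemma part1_i3 k m r : m < k -> 1 < r <= delta k + 1 -> delta k <= m - 2 ->
    (odd k -> forall (t : nat) (B : graph) (c : gV B), 2 <= t ->
      simple B -> #|gV B| = delta k + 2 -> Nr m B = 0 -> is_block B ->
      min_degree_ge (G3 t k B c) (delta k) ->
      let n := 1 + (1 + t * delta k) in
      Nr r (G3 t k B c) <= Nr r (Hn n m k) /\
      (Nr r (G3 t k B c) = Nr r (Hn n m k) <->
         r = 2 /\ isomorphic (G3 t k B c) (Hn n m k))).
Proof.
move=> hmk /andP [r1 rd] dm ok t B c t2 sB cB NmB blk _ n.
have d1 : 1 <= delta k by lia.
have dm2 : delta k + 2 <= m by lia.
have dn : delta k + 2 <= n by rewrite /n; nia.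
have rd' : r <= (delta k).+1 by lia.
have [key Y0 Z0] := binkey r1 rd'.
have [P2 P1] := pascal2 (delta k) r1.
have eG : Nr r (G3 t k B c) = Nr r B + (t - 1) * 'C(delta k, r) + (t - 1) * 'C(delta k, r - 1).
  rewrite /G3 Nr_attach // NrIn_T !Nr_copies ?(ltnW r1) //; last by case: (r) r1 => [|[|]].
  by rewrite !Nr_K -subn1.
have eH := @Nr_Hn r n m k r1 dm2 dn.
have hnd : n - delta k = 2 + (t - 1) * delta k by rewrite /n; nia.
rewrite hnd ok andbT in eH.
have hB1 : Nr r B <= 'C(delta k + 2, r) by rewrite -cB; exact: Nr_le_draws.
have hB2 : m = delta k + 2 -> Nr r B <= 'C(delta k + 1, r) + 'C(delta k, r - 1).
  move=> em.
  have : ~~ clique [set: gV B].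
    apply/negP => cl; move: NmB; rewrite Nr_sum (bigD1 setT) //= cardsT cB -em eqxx cl.
    by [].
  case/nonclique_pair => x [y [nxy nadj]].
  have := Nr_le_nonedge r nxy nadj; rewrite cB.
  have -> : delta k + 2 - 1 = delta k + 1 by lia.
  have -> : delta k + 2 - 2 = delta k by lia.
  by [].
rewrite !addn2 addn1 in hB1 hB2.
move: key Y0 Z0 eG eH hB1 hB2 P1 P2.
set d := delta k; set X := 'C(d, r); set Y := 'C(d, r - 1); set Z := 'C(d, r - 2).
move=> key Y0 Z0 eG eH hB1 hB2 P1 P2.
have hk : (t - 1) * (X + (1 < d)) <= (t - 1) * ((d - 1) * Y) by apply: leq_mul.
case: (ltnP 1 d) => hd.
  rewrite hd in hk.
  have lt : Nr r (G3 t k B c) < Nr r (Hn n m k).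
    rewrite eG eH; case: (ltnP (d + 2) m) => hm.
      rewrite P2 in hB1; nia.
    have := hB2 (_ : m = d.+2); rewrite P1; first by move=> hb; nia.
  split; first exact: ltnW.
  exact: iff_strict.
have hd1 : d = 1 by lia.
have k5 : k = 5 by apply: delta1_k.
have c3 : #|gV B| = 3 by rewrite cB -/d hd1.
have cpl := block3 sB c3 blk.
have r2 : r = 2 by lia.
case: (ltnP 3 m) => hm; last first.
  have m3 : m = 3 by lia.
  move: NmB; rewrite m3 Nr_all ?c3 ?binn //.
  move=> S _; apply/cliqueP => u v _ _; exact: cpl.
have m4 : m = 4 by lia.
have ise : isomorphic (G3 t k B c) (Hn n m k).
  rewrite /n k5 m4 /Hn /=.
  have -> : 1 + (1 + t * 1) - 1 - 2 = t - 1 by lia.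
  exact: iso_G3.
split; first by rewrite (iso_Nr r ise).
exact: iff_eq.
Qed.


Lemma Nr_attach_le r (G H : graph) (c : gV G) (S : {set gV H}) : 1 < r ->
  Nr r (attach c S) <= Nr r G + Nr r H + Nr r.-1 H.
Proof. move=> r1; rewrite Nr_attach // leq_add2l; exact: NrIn_le. Qed.

Lemma part2 : (forall r t n2 : nat, 2 <= r <= delta 7 + 1 -> 1 <= t -> 4 <= n2 ->
    let n := (1 + t * delta 7) + n2 - 1 in
    Nr r (G4 t n2) < Nr r (gjoin (Kg 2) (Ig (n - 2))) /\
    Nr r (G5 t n2) < Nr r (gjoin (Kg 2) (Ig (n - 2)))).
Proof.
move=> r t n2 /andP [r1 r3] t1 n24.
have d7 : delta 7 = 2 by [].
rewrite d7 in r3; cbv zeta; rewrite d7.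
have hT := @Nr_joinI r (Kg 2) (1 + t * 2 + n2 - 1 - 2) (ltnW r1).
rewrite !Nr_K in hT.
have h4 := @Nr_attach_le r _ _ (G1_centre t 7) (star_leaves (n2 - 2)) r1.
have h5 := @Nr_attach_le r _ _ (G1_centre t 7) [set: gV (star (n2 - 2))] r1.
rewrite Nr_G1 // d7 !Nr_star in h4 h5.
rewrite /G4 /G5 hT.
have : r = 2 \/ r = 3 by lia.
case=> er; rewrite er /= in h4 h5 *; rewrite /= ?bin0 ?bin1 ?binn ?(@bin_small 1 2) ?(@bin_small 1 3) ?(@bin_small 2 3) //= in h4 h5 *; split; lia.
Qed.

Lemma Nr_K2 j : Nr j (Kg 2) = (j == 0) * 1 + (j == 1) * 2 + (j == 2) * 1.
Proof. rewrite Nr_K; case: j => [|[|[|j]]] //=; rewrite bin_small //; lia. Qed.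

Lemma part3 : (forall r n : nat, 2 <= r <= delta 9 + 1 -> 4 < n -> ~~ odd n ->
    Nr r (gjoin (Ig 2) (copies ((n - 2)./2) (Kg 2))) < Nr r (gjoin (Kg 3) (Ig (n - 3))) /\
    Nr r (gjoin (Kg 2) (copies ((n - 2)./2) (Kg 2))) < Nr r (gjoin (Kg 3) (Ig (n - 3)))).
Proof.
move=> r n /andP [r1 r4] n4 ev.
have d9 : delta 9 = 3 by [].
rewrite d9 in r4.
set q := (n - 2)./2.
have hq : n = q.*2 + 2.
  have := odd_double_half (n - 2); rewrite oddB; last by lia.
  rewrite (negbTE ev) /= add0n -/q; lia.
have hT := @Nr_joinI r (Kg 3) (n - 3) (ltnW r1).
rewrite !Nr_K in hT.
rewrite hT Nr_join_swap (Nr_joinI _ _ (ltnW r1)) Nr_join_swap (Nr_join3 _ _ Nr_K2).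
rewrite (ltnW r1) r1 !(@Nr_copies r) ?(ltnW r1) // !(@Nr_copies (r - 1)) ?subn_gt0 //.
have : r = 2 \/ r = 3 \/ r = 4 by lia.
have C32 : 'C(3, 2) = 3 by [].
case=> [|[|]] er; rewrite er ?subSS ?subn0 /=; rewrite ?Nr0 ?(@Nr_copies 1) ?(@Nr_copies 2) // !Nr_K /= ?C32 ?bin0 ?bin1 ?binn ?(@bin_small 2 3) ?(@bin_small 2 4) ?(@bin_small 3 4) //; split; lia.
Qed.


Theorem lemma4p2 :
  (* Part (1) *)
  (forall k m r : nat, m < k -> 2 <= r <= delta k + 1 -> delta k <= m - 2 ->
    (* i = 1 : G_1(n,k), n = 1 + t delta_k *)
    (forall t : nat, 2 <= t ->
      let n := 1 + t * delta k in
      Nr r (G1 t k) <= Nr r (Hn n m k) /\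
      (Nr r (G1 t k) = Nr r (Hn n m k) <-> r = 2 /\ isomorphic (G1 t k) (Hn n m k)))
    /\
    (* i = 2 : G_2(n,k), k odd, n = n1 + n2 *)
    (odd k -> forall t1 t2 : nat, 1 <= t1 -> 1 <= t2 ->
      let n := (1 + t1 * delta k) + (1 + t2 * delta k) in
      Nr r (G2 t1 t2 k) <= Nr r (Hn n m k) /\
      (Nr r (G2 t1 t2 k) = Nr r (Hn n m k) <->
         [/\ k = 5, m = 3 &
             exists a : nat, 1 <= a < n /\ isomorphic (G2 t1 t2 k) (dstar a (n - a))]))
    /\
    (* i = 3 : G_3(n,k), k odd, n = 1 + (1 + t delta_k) *)
    (odd k -> forall (t : nat) (B : graph) (c : gV B), 2 <= t ->
      simple B -> #|gV B| = delta k + 2 -> Nr m B = 0 -> is_block B ->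
      min_degree_ge (G3 t k B c) (delta k) ->
      let n := 1 + (1 + t * delta k) in
      Nr r (G3 t k B c) <= Nr r (Hn n m k) /\
      (Nr r (G3 t k B c) = Nr r (Hn n m k) <->
         r = 2 /\ isomorphic (G3 t k B c) (Hn n m k))))
  /\
  (* Part (2): k = 7 *)
  (forall r t n2 : nat, 2 <= r <= delta 7 + 1 -> 1 <= t -> 4 <= n2 ->
    let n := (1 + t * delta 7) + n2 - 1 in
    Nr r (G4 t n2) < Nr r (gjoin (Kg 2) (Ig (n - 2))) /\
    Nr r (G5 t n2) < Nr r (gjoin (Kg 2) (Ig (n - 2))))
  /\
  (* Part (3): k = 9 *)
  (forall r n : nat, 2 <= r <= delta 9 + 1 -> 4 < n -> ~~ odd n ->
    Nr r (gjoin (Ig 2) (copies ((n - 2)./2) (Kg 2))) < Nr r (gjoin (Kg 3) (Ig (n - 3))) /\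
    Nr r (gjoin (Kg 2) (copies ((n - 2)./2) (Kg 2))) < Nr r (gjoin (Kg 3) (Ig (n - 3)))).
Proof.
split; last by split; [exact: part2 | exact: part3].
move=> k m r hmk hr dm; split; first exact: part1_i1.
split; [exact: part1_i2 | exact: part1_i3].
Qed.
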